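(* Let $X,Z$ be complex Banach spaces, $E\in L(X,Z)$, $A\colon\mathrm{dom}(A)\subseteq X\to Z$ closed and densely defined, and assume $(E,A)$ has a complex resolvent index $p_{\mathrm{res}}^{(E,A)}$; set $p:=p_{\mathrm{res}}^{(E,A)}+1$. Fix $\mu\in\rho(E,A)$ and let $X_{\ker}:=\ker R_r(\mu)^p$, $Z_{\ker}:=\ker R_l(\mu)^p$. Then the operator $A_{\ker}\colon\mathrm{dom}(A_{\ker})\subseteq X_{\ker}\to Z_{\ker}$, $x\mapsto Ax$, with $\mathrm{dom}(A_{\ker}):=\mathrm{dom}(A)\cap X_{\ker}$, is well defined and has a bounded inverse $A_{\ker}^{-1}\colon Z_{\ker}\to X_{\ker}$. Furthermore, with $E_{\ker}:=E|_{X_{\ker}}\in L(X_{\ker},Z_{\ker})$, the operators $E_{\ker}A_{\ker}^{-1}\in L(Z_{\ker})$ and $A_{\ker}^{-1}E_{\ker}\in L(X_{\ker})$ are nilpotent of degree not exceeding $p$.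
   Context: $\rho(E,A)$ is the set of $\lambda\in\mathbb C$ for which $\lambda E-A\colon\mathrm{dom}(A)\to Z$ is bijective with bounded inverse. $(E,A)$ has a complex resolvent index if there is a smallest $p_{\mathrm{res}}^{(E,A)}\in\mathbb N_0$ for which there exist $\omega\in\mathbb R$, $C>0$ with $\{\operatorname{Re}\lambda>\omega\}\subseteq\rho(E,A)$ and $\|(\lambda E-A)^{-1}\|\le C|\lambda|^{p_{\mathrm{res}}^{(E,A)}-1}$ for $\operatorname{Re}\lambda>\omega$. $R_r(\lambda):=(\lambda E-A)^{-1}E\in L(X)$, $R_l(\lambda):=E(\lambda E-A)^{-1}\in L(Z)$. *)

(* Defs.v *)
(* Complex scalars: C := R[i] for R : realType
   (mathcomp-real-closed's complex numbers, a numFieldType), so that a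
   complex Banach space is a [completeNormedModType R[i]]. *)
From mathcomp Require Import all_boot all_order all_algebra.
From mathcomp Require Import all_classical all_reals all_analysis.
From mathcomp.real_closed Require Import complex.
Import numFieldNormedType.Exports.
Import Order.TTheory GRing.Theory Num.Theory.

Set Implicit Arguments.
Unset Strict Implicit.
Unset Printing Implicit Defensive.

Local Open Scope classical_set_scope.
Local Open Scope ring_scope.

Section Defs.
Variable R : realType.
Local Notation C := R[i].
Variables X Z : completeNormedModType C.

Definition lin_subspace (D : set X) : Prop :=
  D 0 /\ (forall x y, D x -> D y -> D (x + y)) /\
  (forall (a : C) x, D x -> D (a *: x)).

Definition linear_on (D : set X) (A : X -> Z) : Prop :=
  forall (a : C) x y, D x -> D y -> A (a *: x + y) = a *: A x + A y.

Definition closed_operator (D : set X) (A : X -> Z) : Prop :=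
  closed [set xz : X * Z | D xz.1 /\ xz.2 = A xz.1].

Definition is_resolvent (D : set X) (E : X -> Z) (A : X -> Z) (l : C)
  (Rl : Z -> X) : Prop :=
  (forall z, D (Rl z) /\ l *: E (Rl z) - A (Rl z) = z) /\
  (forall x, D x -> Rl (l *: E x - A x) = x) /\
  (exists M : R, forall z, `|Rl z| <= (M%:C)%C * `|z|).

Definition in_resolvent_set (D : set X) (E A : X -> Z) (l : C) : Prop :=
  exists Rl, is_resolvent D E A l Rl.

Definition resolvent_bound (D : set X) (E A : X -> Z) (n : nat) : Prop :=
  exists (w c : R), 0 < c /\
    forall l : C, w < complex.Re l ->
      exists Rl, is_resolvent D E A l Rl /\
        forall z, `|Rl z| <= (c%:C)%C * `|l| ^ (n%:Z - 1) * `|z|.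

Definition complex_resolvent_index (D : set X) (E A : X -> Z) (pres : nat)
  : Prop :=
  resolvent_bound D E A pres /\
  forall n, resolvent_bound D E A n -> (pres <= n)%N.

End Defs.

(* Main.v *)
Require Import Defs.
From mathcomp Require Import all_boot all_order all_algebra.
From mathcomp Require Import all_classical all_reals all_analysis.
From mathcomp.real_closed Require Import complex.
Import numFieldNormedType.Exports.
Import Order.TTheory GRing.Theory Num.Theory.
Local Open Scope classical_set_scope.
Local Open Scope ring_scope.

Definition linf {K : pzRingType} {V W : lmodType K} (f : V -> W) :=
  forall (a : K) x y, f (a *: x + y) = a *: f x + f y.

Lemma linf0 {K : pzRingType} {V W : lmodType K} {f : V -> W} : linf f -> f 0 = 0.
Proof.
move=> h; have := h 1 0 0; rewrite !scale1r addr0 => H.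
have := congr1 (fun t => t - f 0) H; rewrite /= subrr addrK.
by move/esym.
Qed.

Lemma linfD {K : pzRingType} {V W : lmodType K} {f : V -> W} : linf f -> forall x y,
  f (x + y) = f x + f y.
Proof. by move=> h x y; have := h 1 x y; rewrite !scale1r. Qed.

Lemma linfZ {K : pzRingType} {V W : lmodType K} {f : V -> W} : linf f -> forall a x,
  f (a *: x) = a *: f x.
Proof. by move=> h a x; have := h a x 0; rewrite addr0 (linf0 h) addr0. Qed.

Lemma linfN {K : pzRingType} {V W : lmodType K} {f : V -> W} : linf f -> forall x,
  f (- x) = - f x.
Proof. by move=> h x; rewrite -scaleN1r (linfZ h) scaleN1r. Qed.

Lemma linfB {K : pzRingType} {V W : lmodType K} {f : V -> W} : linf f -> forall x y,
  f (x - y) = f x - f y.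
Proof. by move=> h x y; rewrite (linfD h) (linfN h). Qed.

Lemma linf_comp {K : pzRingType} {U V W : lmodType K} (f : V -> W) (g : U -> V) :
  linf f -> linf g -> linf (f \o g).
Proof. by move=> hf hg a x y /=; rewrite hg hf. Qed.

Lemma linf_iter {K : pzRingType} {V : lmodType K} (f : V -> V) n :
  linf f -> linf (iter n f).
Proof.
move=> hf; elim: n => [|n IH] a x y //=.
by rewrite IH hf.
Qed.

Lemma iter_shift {T U : Type} (f : U -> T) (g : T -> U) n x :
  iter n (f \o g) (f x) = f (iter n (g \o f) x).
Proof. by elim: n => [|n IH] //=; rewrite IH. Qed.

Lemma nil_gen {K : pzRingType} {V : lmodType K} (L T : V -> V) (mu : K) p :
  linf L ->
  (forall v, iter p L v = 0 -> iter p L (T v) = 0) ->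
  (forall v, iter p L v = 0 -> T v = mu *: L (T v) - L v) ->
  forall v, iter p L v = 0 -> iter p T v = 0.
Proof.
move=> hL hK hT.
have hLi := fun n => linf_iter L n hL.
have step : forall m w, iter p L w = 0 -> iter m.+1 L w = 0 ->
    iter m L (T w) = 0.
  move=> m w Kw Mw.
  have KT := hK w Kw.
  have J : forall j, iter m L (T w) = mu ^+ j *: iter (j + m) L (T w).
    elim=> [|j IH]; first by rewrite scale1r.
    rewrite IH {1}(hT w Kw) (linfB (hLi _)) (linfZ (hLi _)).
    have -> : iter (j + m) L (L w) = 0.
      by rewrite -iterSr -addnS iterD Mw (linf0 (hLi _)).
    by rewrite subr0 -iterSr -addSn scalerA -exprSr.
  by rewrite (J p) addnC iterD KT (linf0 (hLi _)) scaler0.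
have main : forall n, (n <= p)%N -> forall v, iter p L v = 0 ->
    iter (p - n) L (iter n T v) = 0 /\ iter p L (iter n T v) = 0.
  elim=> [|n IH] np v Kv; first by rewrite subn0.
  have [h1 h2] := IH (ltnW np) v Kv.
  split; last by apply: hK.
  apply: step => //.
  by rewrite subnSK.
by move=> v Kv; have [] := main p (leqnn p) v Kv; rewrite subnn.
Qed.

Fixpoint hG {K : pzRingType} {V : lmodType K} (L : V -> V) (mu : K) (n : nat) (z : V) : V :=
  match n with 0 => 0 | n.+1 => z + mu *: L (hG L mu n z) end.

Lemma hG_tel {K : comPzRingType} {V : lmodType K} (L : V -> V) (mu : K) n z :
  linf L -> hG L mu n z - mu *: L (hG L mu n z) = z - mu ^+ n *: iter n L z.
Proof.
move=> hL; elim: n => [|n IH] /=; first by rewrite (linf0 hL) scaler0 subr0 scale1r subrr.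
have -> : z + mu *: L (hG L mu n z) - mu *: L (z + mu *: L (hG L mu n z)) =
  z + mu *: L (hG L mu n z - mu *: L (hG L mu n z)) - mu *: L z.
  rewrite (linfB hL) (linfD hL) scalerBr scalerDr opprD !addrA.
  by rewrite addrAC.
rewrite IH (linfB hL) (linfZ hL) scalerBr scalerA addrA addrAC addrK -exprS.
by [].
Qed.

Lemma hG_comm {K : pzRingType} {V : lmodType K} (L M : V -> V) (mu : K) n z :
  linf M -> (forall v, M (L v) = L (M v)) -> M (hG L mu n z) = hG L mu n (M z).
Proof.
move=> hM hc; elim: n => [|n IH] /=; first exact: (linf0 hM).
by rewrite (linfD hM) (linfZ hM) hc IH.
Qed.

Lemma hG0 {K : pzRingType} {V : lmodType K} (L : V -> V) (mu : K) n :
  linf L -> hG L mu n 0 = 0.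
Proof.
move=> hL; elim: n => [|n IH] //=.
by rewrite IH (linf0 hL) scaler0 addr0.
Qed.

Lemma hG_bound {K : numDomainType} {V : normedModType K} (L : V -> V) (mu : K) n k :
  0 <= k -> (forall v, `|L v| <= k * `|v|) ->
  exists c, 0 <= c /\ forall z, `|hG L mu n z| <= c * `|z|.
Proof.
move=> k0 hk; elim: n => [|n [c [c0 hc]]] /=.
  by exists 0; split => // z; rewrite normr0 mul0r.
exists (1 + `|mu| * (k * c)); split.
  by rewrite addr_ge0 // mulr_ge0 // mulr_ge0.
move=> z; apply: (le_trans (ler_normD _ _)).
rewrite normrZ mulrDl mul1r lerD2l -!mulrA ler_wpM2l //.
apply: (le_trans (hk _)); rewrite ler_wpM2l //.
Qed.
Lemma ge0_real (R : realType) (c : R[i]) : 0 <= c -> ((complex.Re c)%:C)%C = c.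
Proof.
rewrite lecE => /andP [/eqP h _]; move: h.
by case: c => a b /= ->.
Qed.

Lemma E_bounded (R : realType) (X Z : normedModType R[i]) (E : {linear X -> Z}) :
  continuous E -> exists k : R[i], 0 <= k /\ forall x, `|E x| <= k * `|x|.
Proof.
move=> Ec.
have := (linear_boundedP E).1 (continuous_linear_bounded 0 (Ec 0)).
move=> [M [Mr HM]].
exists (`|M| + 1); split; first by rewrite addr_ge0.
apply: HM.
by apply: (le_lt_trans (real_ler_norm Mr)); rewrite ltrDl ltr01.
Qed.

Theorem lemma3p1 (R : realType) (X Z : completeNormedModType R[i])
  (E : {linear X -> Z}) (E_cont : continuous E)
  (D : set X) (A : X -> Z)
  (D_sub : lin_subspace D) (A_lin : linear_on D A)
  (A_closed : closed_operator D A) (D_dense : dense D)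
  (pres : nat) (Hpres : complex_resolvent_index D E A pres)
  (mu : R[i]) (Rmu : Z -> X) (Hmu : is_resolvent D E A mu Rmu) :
  let p := pres.+1 in
  let Xker := [set x : X | iter p (Rmu \o E) x = 0] in
  let Zker := [set z : Z | iter p (E \o Rmu) z = 0] in
  (* A_ker is well defined: A maps dom(A) ∩ X_ker into Z_ker *)
  (forall x, D x -> Xker x -> Zker (A x)) /\
  (* E_ker = E|_{X_ker} maps X_ker into Z_ker *)
  (forall x, Xker x -> Zker (E x)) /\
  (* A_ker has a bounded inverse Z_ker -> X_ker, which makes
     E_ker A_ker^{-1} and A_ker^{-1} E_ker nilpotent of degree <= p *)
  (exists Ainv : Z -> X,
     (forall z, Zker z -> D (Ainv z) /\ Xker (Ainv z) /\ A (Ainv z) = z) /\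
     (forall x, D x -> Xker x -> Ainv (A x) = x) /\
     (exists M : R, forall z, Zker z -> `|Ainv z| <= (M%:C)%C * `|z|) /\
     (forall z, Zker z -> iter p (E \o Ainv) z = 0) /\
     (forall x, Xker x -> iter p (Ainv \o E) x = 0)).
Proof.
move=> p Xker Zker.
case: D_sub => [D0 [DD DZ]].
case: Hmu => [hR1 [hR2 [M0 hM0]]].
have DB : forall x y, D x -> D y -> D (x - y).
  by move=> x y Dx Dy; apply: DD => //; rewrite -scaleN1r; apply: DZ.
have A0 : A 0 = 0.
  have := A_lin 1 0 0 D0 D0; rewrite !scale1r addr0 => H.
  by have := congr1 (fun t => t - A 0) H; rewrite /= subrr addrK => /esym.
have AB : forall x y, D x -> D y -> A (x - y) = A x - A y.
  move=> x y Dx Dy; rewrite addrC -scaleN1r A_lin // scaleN1r addrC //.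
have hE : linf E by move=> a x y; rewrite linearP.
have hRl : linf Rmu.
  move=> a z w.
  set y := a *: Rmu z + Rmu w.
  have Dy : D y by apply: DD; [apply: DZ; case: (hR1 z) | case: (hR1 w)].
  rewrite -(hR2 y Dy); congr Rmu.
  rewrite /y A_lin; [|by case: (hR1 z)|by case: (hR1 w)].
  rewrite (linfD hE) (linfZ hE) scalerDr scalerA mulrC -scalerA.
  have e1 := (hR1 z).2; have e2 := (hR1 w).2.
  rewrite -{1}e1 -{1}e2 scalerBr.
  rewrite opprD !addrA; congr (_ + _).
  by rewrite -!addrA; congr (_ + _); rewrite addrC.
pose L := E \o Rmu. pose Rr := Rmu \o E.
have hL : linf L by exact: linf_comp.
have hRr : linf Rr by exact: linf_comp.
have RA : forall x, D x -> Rmu (A x) = mu *: Rr x - x.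
  move=> x Dx; have := hR2 x Dx; rewrite (linfB hRl) (linfZ hRl) => H.
  by rewrite -{3}H opprB addrC subrK.
have ARmu : forall w, A (Rmu w) = mu *: L w - w.
  by move=> w; have := (hR1 w).2 => H; rewrite -{3}H opprB addrC subrK.
have Rinj : forall w, Rmu w = 0 -> w = 0.
  move=> w h; have := (hR1 w).2; rewrite h A0 subr0 => <-.
  by rewrite (linf0 hE) scaler0.
have sh1 : forall n w, iter n Rr (Rmu w) = Rmu (iter n L w).
  by move=> n w; exact: iter_shift.
have sh2 : forall n x, iter n L (E x) = E (iter n Rr x).
  by move=> n x; exact: iter_shift.
have claim1 : forall x, D x -> Xker x -> Zker (A x).
  move=> x Dx Xx; have Xx' : iter p Rr x = 0 := Xx.
  change (iter p L (A x) = 0).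
  apply: Rinj; rewrite -sh1 RA //.
  rewrite (linfB (linf_iter Rr p hRr)) (linfZ (linf_iter Rr p hRr)) -(iterSr p) (iterS p).
  by rewrite Xx' (linf0 hRr) scaler0 subr0.
have claim2 : forall x, Xker x -> Zker (E x).
  move=> x Xx; have Xx' : iter p Rr x = 0 := Xx.
  change (iter p L (E x) = 0).
  by rewrite sh2 Xx' (linf0 hE).
split => //; split => //.
have hLp : linf (iter p L) := linf_iter L p hL.
pose G := hG L mu p.
pose Ainv := fun z => Rmu (- G z).
have AinvD : forall z, D (Ainv z) by move=> z; exact: (hR1 _).1.
have AinvA : forall z, Zker z -> A (Ainv z) = z.
  move=> z Zz; have Zz' : iter p L z = 0 := Zz.
  rewrite /Ainv ARmu (linfN hL) scalerN opprK addrC /G hG_tel //.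
  by rewrite Zz' scaler0 subr0.
have AinvX : forall z, Zker z -> Xker (Ainv z).
  move=> z Zz; have Zz' : iter p L z = 0 := Zz.
  change (iter p Rr (Rmu (- G z)) = 0).
  rewrite sh1 (linfN hLp) /G (hG_comm L (iter p L) mu p z hLp); last first.
    by move=> v; rewrite -iterSr iterS.
  by rewrite Zz' (hG0 _ _ _ hL) oppr0 (linf0 hRl).
have uniq : forall d, D d -> iter p Rr d = 0 -> A d = 0 -> d = 0.
  move=> d Dd Xd Ad.
  have e : d = mu *: Rr d.
    have := RA d Dd; rewrite Ad (linf0 hRl) => /esym/eqP.
    by rewrite subr_eq0 => /eqP.
  have J : forall j, d = mu ^+ j *: iter j Rr d.
    elim=> [|j IH]; first by rewrite scale1r.
    rewrite {1}IH {1}e (linfZ (linf_iter Rr j hRr)) scalerA -exprSr.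
    by rewrite -iterSr.
  by rewrite (J p) Xd scaler0.
have r : forall v, Zker v -> Ainv v = mu *: Rr (Ainv v) - Rmu v.
  move=> v Zv; have H := RA (Ainv v) (AinvD v); rewrite AinvA // in H.
  by rewrite [in RHS]H opprB addrC subrK.
exists Ainv; split; first by move=> z Zz; split => //; split; [exact: AinvX | exact: AinvA].
split.
  move=> x Dx Xx; have Zx := claim1 x Dx Xx.
  have Xx' : iter p Rr x = 0 := Xx.
  have Xy : iter p Rr (Ainv (A x)) = 0 := AinvX _ Zx.
  have : Ainv (A x) - x = 0.
    apply: uniq; first exact: DB.
      by rewrite (linfB (linf_iter Rr p hRr)) Xx' Xy subrr.
    by rewrite AB // AinvA // subrr.
  by move/eqP; rewrite subr_eq0 => /eqP.
split.
  have [k [k0 hk]] := E_bounded _ _ _ E E_cont.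
  pose c0 := ((`|M0|)%:C)%C.
  have c00 : 0 <= c0 by rewrite /c0 ler0c.
  have hc0 : forall z, `|Rmu z| <= c0 * `|z|.
    move=> z; apply: (le_trans (hM0 z)); apply: ler_wpM2r => //.
    by rewrite /c0 lecR ler_norm.
  have hLb : forall v, `|L v| <= (k * c0) * `|v|.
    move=> v; apply: (le_trans (hk _)); rewrite -mulrA ler_wpM2l //.
  have [c [cc hc]] := hG_bound L mu p _ (mulr_ge0 k0 c00) hLb.
  exists (complex.Re (c0 * c)) => z _.
  rewrite ge0_real ?mulr_ge0 //.
  apply: (le_trans (hc0 _)); rewrite normrN -mulrA ler_wpM2l //.
split.
  apply: (nil_gen L (E \o Ainv) mu p hL).
    by move=> v Zv; apply: claim2; apply: AinvX.
  by move=> v Zv; rewrite /= {1}(r v Zv) (linfB hE) (linfZ hE).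
apply: (nil_gen Rr (Ainv \o E) mu p hRr).
  by move=> v Xv; apply: AinvX; apply: claim2.
by move=> v Xv; rewrite /= {1}(r (E v) (claim2 v Xv)).
Qed.
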